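(* Let $N=[n]$, let $v:2^N\to\mathbb{R}_+$ be a monotone submodular valuation with $v(\emptyset)=0$, and let $X$ be a decision map for $v$. Then in every pure Nash equilibrium $p$ of the pricing game defined by $v$ and $X$, the utility of each seller $i$ is $u_i(p)=v(\{i\}\mid N\setminus\{i\})$. In particular, for every pure Nash equilibrium $p$ and every $i$ with $v(\{i\}\mid N\setminus\{i\})>0$, we have $p_i=v(\{i\}\mid N\setminus\{i\})$ and $i\in X(p)$.
   Context: Pricing game: $N=[n]$ services, service $i$ controlled by seller $i$. Buyer valuation $v:2^N\to\mathbb{R}_+$, monotone, $v(\emptyset)=0$; submodular means $v(S\cup T)+v(S\cap T)\le v(S)+v(T)$ for all $S,T$. Marginal value: $v(T\mid S)=v(S\cup T)-v(S)$. For $p\in\mathbb{R}^n_+$, $p(S)=\sum_{j\in S}p_j$, $D(v;p)=\arg\max_{S\subseteq N}(v(S)-p(S))$. A decision map is $X:\mathbb{R}^n_+\to2^N$ with $X(p)\in D(v;p)$ for all $p$. Seller $i$'s utility is $u_i(p)=p_i\mathbf{1}\{i\in X(p)\}$; a pure Nash equilibrium is a $p$ with $u_i(p)\ge u_i(p_i',p_{-i})$ for all $i$ and $p_i'\in\mathbb{R}_+$. *)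

(* Defs.v *)
From mathcomp Require Import all_boot all_order all_algebra.
Set Implicit Arguments. Unset Strict Implicit. Unset Printing Implicit Defensive.
Import Order.TTheory GRing.Theory Num.Theory.
Local Open Scope ring_scope.

Section Pricing.
Variables (R : realFieldType) (n : nat).

Definition price := 'I_n -> R.

Definition nonneg_price (p : price) : Prop := forall j, 0 <= p j.

Definition monotone_val (v : {set 'I_n} -> R) : Prop :=
  forall S T : {set 'I_n}, S \subset T -> v S <= v T.

Definition submodular (v : {set 'I_n} -> R) : Prop :=
  forall S T : {set 'I_n}, v (S :|: T) + v (S :&: T) <= v S + v T.

Definition marg (v : {set 'I_n} -> R) (T S : {set 'I_n}) : R := v (S :|: T) - v S.

Definition pset (p : price) (S : {set 'I_n}) : R := \sum_(j in S) p j.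

Definition in_demand (v : {set 'I_n} -> R) (p : price) (S : {set 'I_n}) : Prop :=
  forall T : {set 'I_n}, v T - pset p T <= v S - pset p S.

Definition decision_map (v : {set 'I_n} -> R) (X : price -> {set 'I_n}) : Prop :=
  forall p, nonneg_price p -> in_demand v p (X p).

Definition utility (X : price -> {set 'I_n}) (i : 'I_n) (p : price) : R :=
  if i \in X p then p i else 0.

Definition upd (p : price) (i : 'I_n) (q : R) : price :=
  fun j => if j == i then q else p j.

Definition pure_NE (X : price -> {set 'I_n}) (p : price) : Prop :=
  nonneg_price p /\
  forall (i : 'I_n) (q : R), 0 <= q -> utility X i (upd p i q) <= utility X i p.

End Pricing.

(* Main.v *)
Require Import Defs.
From mathcomp Require Import all_boot all_order all_algebra.
From mathcomp Require Import ring lra.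
Import Order.TTheory GRing.Theory Num.Theory.
Local Open Scope ring_scope.

Lemma exists_max (R : realFieldType) (T : finType) (P : pred T) (f : T -> R) (x0 : T) :
  P x0 -> exists x, P x /\ forall y, P y -> f y <= f x.
Proof.
move=> Px0.
case: (@arg_maxP _ R T x0 P f Px0) => x Px H.
by exists x; split => // y Py; apply: H.
Qed.

Section Aux.
Variables (R : realFieldType) (n : nat).
Implicit Types (p : price R n) (v : {set 'I_n} -> R) (T S : {set 'I_n}) (i : 'I_n) (q : R).

Lemma pset_upd_notin p i q T : i \notin T -> pset (upd p i q) T = pset p T.
Proof.
move=> hT; apply: eq_bigr => j hj; rewrite /upd; case: eqP => // e.
by move: hT; rewrite -e hj.

Qed.

Lemma pset_upd_in p i q T : i \in T -> pset (upd p i q) T = pset p T - p i + q.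
Proof.
move=> hT; rewrite /pset (bigD1 i hT) [in RHS](bigD1 i hT) /= /upd eqxx.
have -> : \sum_(j in T | j != i) (if j == i then q else p j) = \sum_(j in T | j != i) p j.
  by apply: eq_bigr => j /andP [_ /negbTE ->].
by move: (\sum_(j in T | j != i) p j) => s; lra.
Qed.

Lemma pset_add p i S : i \notin S -> pset p (S :|: [set i]) = pset p S + p i.
Proof. by move=> h; rewrite /pset setUC big_setU1 //= addrC. Qed.

Lemma chain v (subm : submodular v) (W : {set 'I_n}) (c : 'I_n -> R) :
  forall B : {set 'I_n}, (forall e, e \in B -> v (W :|: [set e]) - v W <= c e) ->
  v (W :|: B) - v W <= \sum_(e in B) c e.
Proof.
move=> B; elim: {B}#|B|.+1 {-2}B (ltnSn #|B|) => // k IH B hk hc.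
case: (set_0Vmem B) => [->|[e he]].
  by rewrite setU0 subrr big_set0.
rewrite (bigD1 e he) /=.
have -> : \sum_(i in B | i != e) c i = \sum_(i in B :\ e) c i.
  by apply: eq_bigl => x; rewrite !inE andbC.
have IH' := IH (B :\ e).
have hcard : (#|B :\ e| < k)%N.
  by move: hk; rewrite (cardsD1 e B) he.
have := IH' hcard (fun x hx => hc x (subsetP (subD1set B e) x hx)).
have eqU : W :|: B = (W :|: (B :\ e)) :|: (W :|: [set e]).
  apply/setP => x; rewrite !inE; case: (x =P e) => [->|_]; rewrite ?he ?orbT ?orbF //=.
  by case: (x \in W); case: (x \in B).
have eqI : (W :|: (B :\ e)) :&: (W :|: [set e]) = W.
  apply/setP => x; rewrite !inE; case: (x =P e) => _ /=; case: (x \in W); by case: (x \in B).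

have hs := subm (W :|: (B :\ e)) (W :|: [set e]).
rewrite -eqU eqI in hs.
have := hc e he.
move=> h1 h2; lra.
Qed.

End Aux.

Theorem mainTheorem6 (R : realFieldType) (n : nat)
  (v : {set 'I_n} -> R) (X : price R n -> {set 'I_n}) :
  (forall S, 0 <= v S) -> v set0 = 0 ->
  monotone_val v -> submodular v ->
  decision_map v X ->
  forall p : price R n, pure_NE X p ->
    (forall i : 'I_n, utility X i p = marg v [set i] (~: [set i])) /\
    (forall i : 'I_n, 0 < marg v [set i] (~: [set i]) ->
       p i = marg v [set i] (~: [set i]) /\ i \in X p).
Proof.
move=> v0 vempty mono subm dm p [pnn ne].
have eqT : forall i : 'I_n, ~: [set i] :|: [set i] = setT.
  by move=> i; apply/setP => x; rewrite !inE; case: (x == i).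
have margE : forall i, marg v [set i] (~: [set i]) = v setT - v (~: [set i]).
  by move=> i; rewrite /marg eqT.
have margN : forall i (S : {set 'I_n}), i \notin S ->
    marg v [set i] (~: [set i]) <= v (S :|: [set i]) - v S.
  move=> i S hi; rewrite margE.
  have hs := subm (S :|: [set i]) (~: [set i]).
  have e1 : S :|: [set i] :|: ~: [set i] = setT.
    by apply/setP => x; rewrite !inE; case: (x == i); rewrite ?orbT.
  have e2 : (S :|: [set i]) :&: ~: [set i] = S.
    apply/setP => x; rewrite !inE; case: (x =P i) => [->|_]; rewrite ?orbF ?andbT //.
    by rewrite (negbTE hi).
  rewrite e1 e2 in hs; lra.
have m_ge0 : forall i, 0 <= marg v [set i] (~: [set i]).
  move=> i; rewrite margE subr_ge0; apply: mono; exact: subsetT.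
have nnupd : forall i q, 0 <= q -> nonneg_price (upd p i q).
  by move=> i q hq j; rewrite /upd; case: (j == i).
have updi : forall i q, upd p i q i = q by move=> i q; rewrite /upd eqxx.
have lower : forall i, marg v [set i] (~: [set i]) <= utility X i p.
  move=> i.
  have H : forall q, 0 <= q -> q < marg v [set i] (~: [set i]) -> q <= utility X i p.
    move=> q q0 qm; have := ne i q q0.
    suff -> : utility X i (upd p i q) = q by [].
    rewrite /utility; case: ifP => hin; first exact: updi.
    exfalso.
    have hd := dm _ (nnupd i q q0) (X (upd p i q) :|: [set i]).
    rewrite pset_add ?hin // updi in hd.
    have := margN i (X (upd p i q)) (negbT hin).
    lra.
  have u0 : 0 <= utility X i p by rewrite /utility; case: ifP => _ //; exact: pnn.
  rewrite leNgt; apply/negP => hlt.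
  have := H ((utility X i p + marg v [set i] (~: [set i])) / 2).
  move=> H'; have := H' ltac:(lra) ltac:(lra); lra.
have down : forall j (T : {set 'I_n}), j \notin X p -> j \in T ->
    v T - pset p T + p j <= v (X p) - pset p (X p).
  move=> j T hj hjT; rewrite leNgt; apply/negP => hlt.
  set eps := v T - pset p T + p j - (v (X p) - pset p (X p)).
  have he : 0 < eps by rewrite /eps; lra.
  have hne := ne j (eps / 2) ltac:(lra).
  have uj : utility X j p = 0 by rewrite /utility (negbTE hj).
  rewrite uj /utility in hne.
  move: hne; case: ifP => hj' hne.
    rewrite updi in hne; lra.
  have hd := dm _ (nnupd j (eps/2) ltac:(lra)) T.
  rewrite pset_upd_in // pset_upd_notin ?hj' // in hd.
  have := dm p pnn (X (upd p j (eps / 2))).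
  rewrite /eps in hd; lra.
have upper : forall i, utility X i p <= marg v [set i] (~: [set i]).
  move=> i; rewrite /utility; case: ifP => hiS; last exact: m_ge0.
  have [T0 [hT0 hmax]] := @exists_max R _ (fun T : {set 'I_n} => i \notin T)
     (fun T => v T - pset p T) set0 ltac:(by rewrite /= in_set0).
  have hS := dm p pnn.
  have hopt : in_demand v p T0.
    move=> T.
    suff: v (X p) - pset p (X p) <= v T0 - pset p T0 by have := hS T; lra.
    rewrite leNgt; apply/negP => hlt.
    set d := v (X p) - pset p (X p) - (v T0 - pset p T0).
    have hd0 : 0 < d by rewrite /d; lra.
    have q0 : 0 <= p i + d / 2 by have := pnn i; lra.
    have hne := ne i (p i + d / 2) q0.
    rewrite /utility hiS in hne.
    move: hne; case: ifP => hi' hne.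
      rewrite updi in hne; lra.
    have hd := dm _ (nnupd i _ q0) (X p).
    rewrite pset_upd_in // pset_upd_notin ?hi' // in hd.
    have := hmax (X (upd p i (p i + d / 2))) (negbT hi').
    rewrite /d in hd; lra.
  have hU := hopt (X p).
  have zero : forall j, j \in T0 -> j \notin X p -> p j = 0.
    move=> j hj hjS; have := down j T0 hjS hj; have := hS T0; have := pnn j.
    lra.
  pose c := fun e => if e \in X p then p e else 0.
  pose B := ~: T0 :\ i.
  have hch := @chain R n v subm T0 c B.
  have hc : forall e, e \in B -> v (T0 :|: [set e]) - v T0 <= c e.
    move=> e; rewrite !inE => /andP [_ heT].
    rewrite /c; case: ifP => heS.
      have := hopt (T0 :|: [set e]); rewrite pset_add //; lra.
    have := down e (T0 :|: [set e]) (negbT heS) ltac:(by rewrite !inE eqxx orbT).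
    rewrite pset_add //; lra.
  have := hch hc.
  have eTB : T0 :|: B = ~: [set i].
    apply/setP => x; rewrite !inE; case: (x =P i) => [->|_]; rewrite ?(negbTE hT0) //=.
    by case: (x \in T0).
  rewrite eTB.
  have sT0 : \sum_(e in T0) c e = pset p T0.
    apply: eq_bigr => e he; rewrite /c; case: ifP => // hn.
    by rewrite zero // hn.
  have sU : \sum_(e in T0) c e + \sum_(e in B) c e = \sum_(e in ~: [set i]) c e.
    rewrite -bigU; last first.
      rewrite disjoint_subset; apply/subsetP => x hx; rewrite !inE hx /=; by rewrite andbF.
    by apply: eq_bigl => x; rewrite -eTB !inE.

  have sAll : \sum_(e in ~: [set i]) c e + p i = pset p (X p).
    rewrite /pset [RHS]big_mkcond [RHS](bigD1 i) //= hiS addrC.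
    congr (_ + _); apply: eq_bigl => x; by rewrite !inE.
  have hmono := mono (X p) setT (subsetT _).
  move=> hchain; have hST0 := hS T0; rewrite margE; clear -hchain hST0 sT0 sU sAll hmono.
  move: hchain hST0 sT0 sU sAll hmono.
  move: (\sum_(e in T0) c e) (\sum_(e in B) c e) (\sum_(e in ~: [set i]) c e) => a b d.
  move: (v _) (v _) (v _) (v _) (pset p _) (pset p _) (p i) => x1 x2 x3 x4 x5 x6 x7.
  lra.
split.
  by move=> i; apply/eqP; rewrite eq_le upper lower.
move=> i hpos.
have hu : utility X i p = marg v [set i] (~: [set i]).
  by apply/eqP; rewrite eq_le upper lower.
move: hu; rewrite /utility; case: ifP => hin hu; first by split.
by move: hpos; rewrite -hu ltxx.
Qed.
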